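(* Let $G$ be a finite simple undirected graph and let $A, B, C$ be $\omega(G)$-cliques of $G$ that are pairwise adjacent in $\mathsf{TJ}_{\omega(G)}(G)$. Then $A \cap B = B \cap C = A \cap C$.
   Context: $\omega(G)$ is the maximum size of a clique (set of pairwise adjacent vertices) of $G$. For an integer $k$, $\mathsf{TJ}_k(G)$ (token jumping graph) is the graph whose vertices are the cliques of $G$ of size $k$, two such cliques $C, C'$ being adjacent iff $|C \setminus C'| = |C' \setminus C| = 1$. *)

(* Defs.v *)
From mathcomp Require Import all_boot.
Set Implicit Arguments. Unset Strict Implicit. Unset Printing Implicit Defensive.

Definition simple_graph (T : finType) (e : rel T) : Prop :=
  symmetric e /\ irreflexive e.

Definition is_clique (T : finType) (e : rel T) (A : {set T}) : bool :=
  [forall x in A, forall y in A, (x != y) ==> e x y].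

Definition clique_number (T : finType) (e : rel T) : nat :=
  \max_(A : {set T} | is_clique e A) #|A|.

Definition is_kclique (T : finType) (e : rel T) (k : nat) (A : {set T}) : bool :=
  is_clique e A && (#|A| == k).

Definition TJ_adj (T : finType) (e : rel T) (k : nat) (C D : {set T}) : bool :=
  [&& is_kclique e k C, is_kclique e k D,
      #|C :\: D| == 1 & #|D :\: C| == 1].

(* Main.v *)
Require Import Defs.
From mathcomp Require Import all_boot.

Lemma cliqueP (T : finType) (e : rel T) (X : {set T}) u v :
  is_clique e X -> u \in X -> v \in X -> u != v -> e u v.
Proof.
by move=> /forallP/(_ u)/implyP H hu hv; move: (H hu) => /forallP/(_ v)/implyP/(_ hv)/implyP.
Qed.

Lemma cardI1 (T : finType) (A B : {set T}) w :
  #|A| = w -> #|A :\: B| = 1 -> #|A :&: B| = w.-1.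
Proof. by move=> hA hD; have := cardsID B A; rewrite hA hD => <-; rewrite addn1. Qed.

Arguments cliqueP {T e X u v}.
Arguments cardI1 {T A B w}.

Lemma card1_eq (T : finType) (D : {set T}) y z :
  #|D| = 1 -> y \in D -> z \in D -> z = y.
Proof.
by move=> /eqP/cards1P [a ->]; rewrite !inE => /eqP -> /eqP ->.
Qed.

Arguments card1_eq {T D y z}.

Lemma key (T : finType) (e : rel T) w (A B C : {set T}) :
  symmetric e -> (forall X, is_clique e X -> #|X| <= w) ->
  is_clique e A -> is_clique e B -> is_clique e C ->
  #|A| = w -> #|B| = w -> #|C| = w ->
  #|A :\: B| = 1 -> #|C :\: A| = 1 -> #|C :\: B| = 1 ->
  A :&: B \subset C.
Proof.
move=> sym bnd cA cB cC hA hB hC hAB hCA hCB.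
apply/subsetP => x; rewrite inE => /andP [xA xB].
apply/negPn/negP => xC.
have exy : forall y, y \in C -> e x y.
  move=> y yC; have xy : x != y by apply/eqP => E; rewrite E yC in xC.
  case yA: (y \in A); first exact: cliqueP cA xA yA xy.
  case yB: (y \in B); first exact: cliqueP cB xB yB xy.
  exfalso.
  have sub : C :&: A \subset A :&: B.
    apply/subsetP => z; rewrite !inE => /andP [zC zA]; rewrite zA /=.
    apply/negPn/negP => zB.
    have : z = y.
      apply: (@card1_eq _ (C :\: B) y z hCB).
        by rewrite inE yB yC.
      by rewrite inE zC andbT.
    by move=> E; rewrite E yA in zA.
  have E : C :&: A = A :&: B.
    apply/eqP; rewrite eqEcard sub /= (cardI1 hA hAB) (cardI1 hC hCA) //.
  have : x \in C :&: A by rewrite E inE xA xB.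
  by rewrite inE (negbTE xC).
have cl : is_clique e (x |: C).
  apply/forallP => u; apply/implyP => hu; apply/forallP => v; apply/implyP => hv.
  apply/implyP => uv.
  case/setU1P: hu => [eu | uC]; case/setU1P: hv => [ev | vC].
  - by rewrite eu ev eqxx in uv.
  - by rewrite eu; apply: exy.
  - by rewrite ev sym; apply: exy.
  - exact: cliqueP cC uC vC uv.
have := bnd _ cl; rewrite cardsU1 xC hC.
case: w hA hB hC {hAB bnd} => [|w] /=; last by rewrite ltnn.
by move=> _ _ _; rewrite ltnn.
Qed.

Arguments key {T e w A B C}.

Theorem lemma4p2 (T : finType) (e : rel T) (A B C : {set T}) :
  simple_graph e ->
  TJ_adj e (clique_number e) A B ->
  TJ_adj e (clique_number e) B C ->
  TJ_adj e (clique_number e) A C ->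
  A :&: B = B :&: C /\ B :&: C = A :&: C.
Proof.
move=> [sym _].
set w := clique_number e.
have bnd : forall X, is_clique e X -> #|X| <= w.
  by move=> X cX; rewrite /w /clique_number; exact: (@leq_bigmax_cond _ _ (fun X : {set T} => #|X|) X cX).
rewrite /TJ_adj /is_kclique.
move=> /and4P [/andP [cA /eqP hA] /andP [cB /eqP hB] /eqP hAB /eqP hBA].
move=> /and4P [_ /andP [cC /eqP hC] /eqP hBC /eqP hCB].
move=> /and4P [_ _ /eqP hAC /eqP hCA].
have s1 := key sym bnd cA cB cC hA hB hC hAB hCA hCB.
have s2 := key sym bnd cA cC cB hA hC hB hAC hBA hBC.
have e1 : A :&: B = B :&: C.
  apply/eqP; rewrite eqEcard (cardI1 hA hAB) (cardI1 hB hBC) leqnn andbT.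
  apply/subsetP => x xAB; rewrite inE (subsetP s1 _ xAB).
  by move: xAB; rewrite inE => /andP [_ ->].
have e2 : A :&: C = A :&: B.
  apply/eqP; rewrite eqEcard (cardI1 hA hAB) (cardI1 hA hAC) leqnn andbT.
  apply/subsetP => x xAC; rewrite inE (subsetP s2 _ xAC).
  by move: xAC; rewrite inE => /andP [-> _].
by split; rewrite // e2 e1.
Qed.
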